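(* Let $(\mathcal A,\phi)$ be a noncommutative probability space and $U,V\in\mathcal A$ unitaries. Then: (1) $j_{U^{-1}}=j_U\circ\Sigma$ and $j_{UV}=j_U\star j_V$; (2) if $U$ and $V$ are $*$-free in $(\mathcal A,\phi)$, then the image $*$-algebras $j_U(U_n^{nc})$ and $j_V(U_n^{nc})$ are $*$-free in the noncommutative probability space $\big(E_{11}(\mathcal A\sqcup M_n(\mathbb C))E_{11},\,n(\phi*\mathrm{tr}_n)\big)$.
   Context: A noncommutative probability space $(\mathcal A,\phi)$ is a unital $*$-algebra with a state. $M_n(\mathbb C)$ carries the normalized trace $\mathrm{tr}_n=\frac1n\mathrm{Tr}$; $E_{ij}$ are the matrix units. $\mathcal A\sqcup M_n(\mathbb C)$ is the free product of unital $*$-algebras with the free product state $\phi*\mathrm{tr}_n$ (the unique unital functional vanishing on alternating products of centered elements). $E_{11}(\mathcal A\sqcup M_n(\mathbb C))E_{11}=\{E_{11}XE_{11}\}$ is a $*$-algebra with unit $E_{11}$, equipped with the state $n(\phi*\mathrm{tr}_n)$. $U_n^{nc}$ is the universal unital $*$-algebra generated by $u_{ij}$ ($1\le i,j\le n$) with $\sum_k u_{ki}^*u_{kj}=\delta_{ij}=\sum_k u_{ik}u_{jk}^*$; $\Delta(u_{ij})=\sum_ku_{ik}^{(1)}u_{kj}^{(2)}$ (into $U_n^{nc}\sqcup U_n^{nc}$), $\Sigma(u_{ij})=u_{ji}^*$. For unital $*$-homomorphisms $j_1,j_2:U_n^{nc}\to\mathcal B$, $j_1\star j_2=(j_1\sqcup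 j_2)\circ\Delta$. For a unitary $U\in\mathcal A$, $j_U:U_n^{nc}\to E_{11}(\mathcal A\sqcup M_n(\mathbb C))E_{11}$ is the unique unital $*$-homomorphism with $j_U(u_{ij})=E_{1i}UE_{j1}$. Subalgebras are $*$-free if the state restricted to the algebra they generate is the free product of the restrictions. *)

(* Defs.v *)
From HB Require Import structures.
From mathcomp Require Import all_boot all_order all_algebra.
Set Implicit Arguments. Unset Strict Implicit. Unset Printing Implicit Defensive.
Import Order.TTheory GRing.Theory Num.Theory.
Local Open Scope ring_scope.

(* Unital *-algebras over a numeric closed field C (standing for the  *)
(* complex numbers).                                     *)
Record starAlg (C : numClosedFieldType) := StarAlg {
  sa_car :> algType C;
  sa_star : sa_car -> sa_car;
  sa_starK : involutive sa_star;
  sa_starD : forall x y, sa_star (x + y) = sa_star x + sa_star y;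
  sa_starZ : forall (c : C) x, sa_star (c *: x) = (Num.conj c) *: sa_star x;
  sa_starM : forall x y, sa_star (x * y) = sa_star y * sa_star x
}.
Arguments sa_star {C} s _.
Notation star x := (sa_star _ x).

Section Defs.
Variable C : numClosedFieldType.

Definition unital_star_hom (A B : starAlg C) (f : A -> B) : Prop :=
  [/\ forall x y, f (x + y) = f x + f y,
      forall (c : C) x, f (c *: x) = c *: f x,
      forall x y, f (x * y) = f x * f y,
      f 1 = 1 &
      forall x, f (star x) = star (f x)].

(* unital *-homomorphism into the corner algebra  p B p  (whose unit is p),
   viewed as a map into B. *)
Definition corner_star_hom (A B : starAlg C) (p : B) (f : A -> B) : Prop :=
  [/\ forall x y, f (x + y) = f x + f y,
      forall (c : C) x, f (c *: x) = c *: f x,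
      forall x y, f (x * y) = f x * f y,
      f 1 = p &
      forall x, f (star x) = star (f x)].

Definition lin_functional (A : starAlg C) (phi : A -> C) : Prop :=
  (forall x y, phi (x + y) = phi x + phi y) /\
  (forall (c : C) x, phi (c *: x) = c * phi x).

Definition is_state (A : starAlg C) (phi : A -> C) : Prop :=
  [/\ lin_functional phi, phi 1 = 1 & forall x, 0 <= phi (star x * x)].

Definition unitary (A : starAlg C) (U : A) : Prop :=
  U * star U = 1 /\ star U * U = 1.

Inductive genStar (A : starAlg C) (S : A -> Prop) : A -> Prop :=
  | genStar_in x : S x -> genStar S x
  | genStar_1 : genStar S 1
  | genStar_add x y : genStar S x -> genStar S y -> genStar S (x + y)
  | genStar_scale (c : C) x : genStar S x -> genStar S (c *: x)
  | genStar_mul x y : genStar S x -> genStar S y -> genStar S (x * y)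
  | genStar_star x : genStar S x -> genStar S (star x).

Definition free_pair (B : starAlg C) (psi : B -> C) (P1 P2 : B -> Prop) : Prop :=
  forall s : seq (bool * B),
    (0 < size s)%N ->
    (forall k, (k.+1 < size s)%N ->
       (nth (true, 0) s k).1 != (nth (true, 0) s k.+1).1) ->
    (forall k, (k < size s)%N ->
       let x := nth (true, 0) s k in
       (if x.1 then P1 x.2 else P2 x.2) /\ psi x.2 = 0) ->
    psi (\prod_(x <- s) x.2) = 0.

Definition range (A B : Type) (f : A -> B) : B -> Prop :=
  fun y => exists x, y = f x.

Definition is_free_product (A1 A2 P : starAlg C) (i1 : A1 -> P) (i2 : A2 -> P)
  : Prop :=
  [/\ unital_star_hom i1, unital_star_hom i2 &
      forall (T : starAlg C) (f1 : A1 -> T) (f2 : A2 -> T),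
        unital_star_hom f1 -> unital_star_hom f2 ->
        exists! h : P -> T,
          [/\ unital_star_hom h, forall x, h (i1 x) = f1 x
            & forall x, h (i2 x) = f2 x]].

Definition is_free_product_state (A1 A2 P : starAlg C) (i1 : A1 -> P)
  (i2 : A2 -> P) (phi1 : A1 -> C) (phi2 : A2 -> C) (psi : P -> C) : Prop :=
  [/\ lin_functional psi, psi 1 = 1,
      forall x, psi (i1 x) = phi1 x,
      forall x, psi (i2 x) = phi2 x &
      free_pair psi (range i1) (range i2)].

Definition unitary_rel (m : nat) (T : starAlg C) (v : 'I_m -> 'I_m -> T) : Prop :=
  (forall i j, \sum_(k < m) star (v k i) * v k j = (i == j)%:R) /\
  (forall i j, \sum_(k < m) v i k * star (v j k) = (i == j)%:R).

Definition is_Unc (m : nat) (Un : starAlg C) (u : 'I_m -> 'I_m -> Un) : Prop :=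
  unitary_rel u /\
  forall (T : starAlg C) (v : 'I_m -> 'I_m -> T), unitary_rel v ->
    exists! h : Un -> T, unital_star_hom h /\ forall i j, h (u i j) = v i j.

Definition mx_star (n : nat) (M : 'M[C]_n.+1) : 'M[C]_n.+1 :=
  (map_mx Num.conj M)^T.

Lemma mx_starK n : involutive (@mx_star n).
Proof.
move=> M; rewrite /mx_star map_trmx trmxK; apply/matrixP=> i j.
by rewrite !mxE conjCK.
Qed.

Lemma mx_starD n (M N : 'M[C]_n.+1) : mx_star (M + N) = mx_star M + mx_star N.
Proof. by rewrite /mx_star map_mxD linearD. Qed.

Lemma mx_starZ n (c : C) (M : 'M[C]_n.+1) :
  mx_star (c *: M) = (Num.conj c) *: mx_star M.
Proof. by rewrite /mx_star map_mxZ linearZ. Qed.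

Lemma mx_starM n (M N : 'M[C]_n.+1) : mx_star (M * N) = mx_star N * mx_star M.
Proof. by rewrite /mx_star -!mulmxE map_mxM trmx_mul. Qed.

Definition Mstar (n : nat) : starAlg C :=
  @StarAlg C 'M[C]_n.+1 (@mx_star n) (@mx_starK n) (@mx_starD n)
    (@mx_starZ n) (@mx_starM n).

Definition ntr (n : nat) (M : Mstar n) : C := (n.+1)%:R^-1 * \tr M.

Definition Eu (n : nat) (i j : 'I_n.+1) : Mstar n := delta_mx i j.

End Defs.

(* Main.v *)
Require Import Defs.
From HB Require Import structures.
From mathcomp Require Import all_boot all_order all_algebra.
From mathcomp Require Import boolp.
Set Implicit Arguments. Unset Strict Implicit. Unset Printing Implicit Defensive.
Import Order.TTheory GRing.Theory Num.Theory.
Local Open Scope ring_scope.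

Section Gen.
Variable C : numClosedFieldType.
Variable Un : starAlg C.
Variable P : Un -> Prop.
Hypothesis P1 : P 1.
Hypothesis PD : forall x y, P x -> P y -> P (x + y).
Hypothesis PZ : forall (c : C) x, P x -> P (c *: x).
Hypothesis PM : forall x y, P x -> P y -> P (x * y).
Hypothesis PS : forall x, P x -> P (star x).

Definition Pb : pred Un := fun x => `[< P x >].

Lemma Pb_closed : GRing.subsemialg_closed Pb.
Proof.
have inP x : (x \in Pb) = `[< P x >] by [].
split.
- by rewrite inP; apply/asboolP.
- split; first by rewrite inP; apply/asboolP; have := PZ 0 P1; rewrite scale0r.
  by move=> x y; rewrite !inP => /asboolP Hx /asboolP Hy; apply/asboolP; apply: PD.
- by move=> c x; rewrite !inP => /asboolP Hx; apply/asboolP; apply: PZ.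
- by move=> x y; rewrite !inP => /asboolP Hx /asboolP Hy; apply/asboolP; apply: PM.
Qed.

Definition subT := {x : Un | Pb x}.
HB.instance Definition _ := [isSub of subT for @sval Un Pb].
HB.instance Definition _ := [Choice of subT by <:].
HB.instance Definition _ := GRing.SubChoice_isSubAlgebra.Build C Un Pb subT Pb_closed.

Lemma Pbs (x : subT) : Pb (star (val x)).
Proof. by apply/asboolP; apply: PS; apply/asboolP; exact: valP x. Qed.
Definition sstar (x : subT) : subT := exist _ (star (val x)) (Pbs x).
Lemma valD (x y : subT) : val (x + y) = val x + val y. Proof. by []. Qed.
Lemma valZ c (x : subT) : val (c *: x) = c *: val x. Proof. by []. Qed.
Lemma valM (x y : subT) : val (x * y) = val x * val y. Proof. by []. Qed.
Lemma val1 : val (1 : subT) = 1. Proof. by []. Qed.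
Lemma sstarK : involutive sstar.
Proof. by move=> x; apply: val_inj; rewrite /= sa_starK. Qed.
Lemma sstarD x y : sstar (x + y) = sstar x + sstar y.
Proof. by apply: val_inj; rewrite /= sa_starD. Qed.
Lemma sstarZ (c : C) x : sstar (c *: x) = (Num.conj c) *: sstar x.
Proof. by apply: val_inj; rewrite /= sa_starZ. Qed.
Lemma sstarM x y : sstar (x * y) = sstar y * sstar x.
Proof. by apply: val_inj; rewrite /= sa_starM. Qed.
Definition subS : starAlg C := StarAlg sstarK sstarD sstarZ sstarM.
End Gen.

Lemma gen_ind (C : numClosedFieldType) (m : nat) (Un : starAlg C)
  (u : 'I_m -> 'I_m -> Un) (P : Un -> Prop) :
  is_Unc u ->
  P 1 -> (forall x y, P x -> P y -> P (x + y)) ->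
  (forall (c : C) x, P x -> P (c *: x)) ->
  (forall x y, P x -> P y -> P (x * y)) ->
  (forall x, P x -> P (star x)) ->
  (forall i j, P (u i j)) -> forall x, P x.
Proof.
move=> [ur Uuniv] P1 PD PZ PM PS Pu.
pose T := subS P1 PD PZ PM PS.
have Pbu i j : Pb P (u i j) by apply/asboolP.
pose v i j : T := exist _ (u i j) (Pbu i j).
have val0 : val (0 : T) = 0 by [].
have valsum (I : Type) (r : seq I) (F : I -> T) : val (\sum_(k <- r) F k) = \sum_(k <- r) val (F k).
  by elim: r => [|a r IH]; rewrite ?big_nil ?big_cons //= -IH.
have vr : unitary_rel v.
  case: ur => ur1 ur2; split=> i j; apply: val_inj; rewrite valsum.
  - by rewrite ur1; case: (i == j).
  - by rewrite ur2; case: (i == j).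
have [h [[[hD hZ hM hone hS] hu] _]] := Uuniv T v vr.
have [g [_ gU]] := Uuniv Un u ur.
have e1 : g = val \o h.
  apply: gU; split.
  - split=> [x y|c x|x y||x] /=; by rewrite ?hD ?hZ ?hM ?hone ?hS.
  - by move=> i j /=; rewrite hu.
have e2 : g = id.
  by apply: gU; split; [split|].
move=> x; have := valP (h x); move/asboolP.
by have -> : val (h x) = x by rewrite -[val (h x)]/((val \o h) x) -e1 e2.
Qed.

Section Basics.
Variable C : numClosedFieldType.
Implicit Types A B : starAlg C.

Lemma idem0 (V : zmodType) (x : V) : x = x + x -> x = 0.
Proof. by move=> h; apply: (addrI x); rewrite addr0 -h. Qed.

Lemma star0 A : star (0 : A) = 0.
Proof. by apply: idem0; rewrite -sa_starD addr0. Qed.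
Lemma star1 A : star (1 : A) = 1.
Proof.
have := @sa_starM _ A (star 1) 1.
by rewrite mulr1 !sa_starK mulr1 => /esym.
Qed.
Lemma starN A (x : A) : star (- x) = - star x.
Proof. by apply/eqP; rewrite -subr_eq0 opprK -sa_starD addNr star0. Qed.
Lemma starB A (x y : A) : star (x - y) = star x - star y.
Proof. by rewrite sa_starD starN. Qed.

Lemma hom0 A B (f : A -> B) : (forall x y, f (x + y) = f x + f y) -> f 0 = 0.
Proof. by move=> fD; apply: idem0; rewrite -fD addr0. Qed.

Lemma hom_sum A B (f : A -> B) (I : Type) (r : seq I) (F : I -> A) :
  (forall x y, f (x + y) = f x + f y) ->
  f (\sum_(k <- r) F k) = \sum_(k <- r) f (F k).
Proof.
move=> fD; elim: r => [|a r IH]; rewrite ?big_nil ?big_cons ?hom0 //.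
by rewrite fD IH.
Qed.

Lemma star_Eu n (i j : 'I_n.+1) : star (Eu C i j) = Eu C j i.
Proof.
rewrite /= /mx_star /Eu; apply/matrixP => a b; rewrite !mxE.
by rewrite conjC_nat andbC.
Qed.

Lemma mul_Eu n (i j k : 'I_n.+1) : Eu C i j * Eu C j k = Eu C i k.
Proof. by rewrite /Eu -mulmxE mul_delta_mx. Qed.

Lemma sum_Eu n : \sum_(k < n.+1) Eu C k k = 1.
Proof. by rewrite /Eu -(mx1_sum_delta C n.+1). Qed.
End Basics.

Lemma corner_eq (C : numClosedFieldType) (m : nat) (Un B : starAlg C)
  (u : 'I_m -> 'I_m -> Un) (p : B) (f g : Un -> B) :
  is_Unc u -> corner_star_hom p f -> corner_star_hom p g ->
  (forall i j, f (u i j) = g (u i j)) -> forall x, f x = g x.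
Proof.
move=> hU [fD fZ fM f1 fS] [gD gZ gM g1 gS] fg.
apply: (gen_ind (P := fun x => f x = g x) hU).
- by rewrite f1 g1.
- by move=> x y ex ey; rewrite fD gD ex ey.
- by move=> c x ex; rewrite fZ gZ ex.
- by move=> x y ex ey; rewrite fM gM ex ey.
- by move=> x ex; rewrite fS gS ex.
- exact: fg.
Qed.

Lemma corner_comp (C : numClosedFieldType) (A W B : starAlg C) (p : B)
  (f : W -> B) (s : A -> W) :
  corner_star_hom p f -> unital_star_hom s -> corner_star_hom p (f \o s).
Proof.
move=> [fD fZ fM f1 fS] [sD sZ sM s1 sS]; split=> /= [x y|c x|x y||x].
- by rewrite sD fD.
- by rewrite sZ fZ.
- by rewrite sM fM.
- by rewrite s1 f1.
- by rewrite sS fS.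
Qed.
Lemma cmp_mx (C : numClosedFieldType) n (X : Mstar C n) :
  Eu C ord0 ord0 * X * Eu C ord0 ord0 = X ord0 ord0 *: Eu C ord0 ord0.
Proof.
rewrite /Eu -!mulmxE; apply/matrixP => i j; rewrite !mxE.
rewrite (bigD1 ord0) //= big1 => [|k /negbTE hk]; last by rewrite [delta_mx _ _ k j]mxE hk andFb mulr0.
rewrite addr0 [delta_mx _ _ ord0 j]mxE eqxx andTb mxE (bigD1 ord0) //= big1 => [|k /negbTE hk]; last by rewrite mxE hk andbF mul0r.
rewrite mxE !eqxx andbT addr0.
by case: (i == ord0); case: (j == ord0); rewrite /= ?mulr1 ?mulr0 ?mul0r ?mul1r.
Qed.
Lemma tr_E00 (C : numClosedFieldType) n : ntr (Eu C (n:=n) ord0 ord0) = (n.+1)%:R^-1.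
Proof.
rewrite /ntr /Eu /mxtrace (bigD1 ord0) //= big1 => [|k /negbTE hk]; last by rewrite mxE hk.
by rewrite mxE !eqxx addr0 mulr1.
Qed.

Definition Ralt (X : Type) : rel (bool * X) := fun a b => a.1 != b.1.

Lemma sorted_nth (T : Type) (R : rel T) (d : T) (s : seq T) :
  sorted R s -> forall k, (k.+1 < size s)%N -> R (nth d s k) (nth d s k.+1).
Proof.
case: s => [|a s] //= /(pathP d) H k Hk; exact: H.
Qed.

Lemma nth_sorted (T : Type) (R : rel T) (d : T) (s : seq T) :
  (forall k, (k.+1 < size s)%N -> R (nth d s k) (nth d s k.+1)) -> sorted R s.
Proof.
case: s => [|a s] //= H; apply/(pathP d) => k Hk; exact: H.
Qed.

Lemma sorted_replace (T : Type) (R : rel T) (l1 l2 : seq T) (e e' : T) :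
  sorted R (l1 ++ e :: l2) ->
  (forall x, R x e -> R x e') -> (forall y, R e y -> R e' y) ->
  sorted R (l1 ++ e' :: l2).
Proof.
move=> H H1 H2; case: l1 H => [|a l1] /=.
  by case: l2 => [|b l2] //= /andP [/H2 -> ->].
rewrite !cat_path /= => /and3P [-> /H1 -> /=].
by case: l2 => [|b l2] //= /andP [/H2 -> ->].
Qed.

Section Free.
Variable C : numClosedFieldType.
Variable n : nat.
Variables (A B : starAlg C) (phi : A -> C) (iA : A -> B) (iM : Mstar C n -> B)
  (psi : B -> C) (S : bool -> A -> Prop).
Hypotheses (iAD : forall x y, iA (x + y) = iA x + iA y)
  (iAZ : forall (c : C) x, iA (c *: x) = c *: iA x)
  (iAM : forall x y, iA (x * y) = iA x * iA y) (iA1 : iA 1 = 1).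
Hypotheses (iMD : forall x y, iM (x + y) = iM x + iM y)
  (iMZ : forall (c : C) x, iM (c *: x) = c *: iM x)
  (iMM : forall x y, iM (x * y) = iM x * iM y) (iM1 : iM 1 = 1).
Hypotheses (psiD : forall x y, psi (x + y) = psi x + psi y)
  (psiZ : forall (c : C) x, psi (c *: x) = c * psi x) (psi1 : psi 1 = 1)
  (psiA : forall x, psi (iA x) = phi x) (psiM : forall x, psi (iM x) = ntr x)
  (freeAM : free_pair psi (range iA) (range iM)).
Hypotheses (phiD : forall x y, phi (x + y) = phi x + phi y)
  (phiZ : forall (c : C) x, phi (c *: x) = c * phi x) (phi1 : phi 1 = 1).
Hypotheses (S1 : forall t, S t 1) (SD : forall t x y, S t x -> S t y -> S t (x + y))
  (SZ : forall t (c : C) x, S t x -> S t (c *: x))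
  (SM : forall t x y, S t x -> S t y -> S t (x * y))
  (SS : forall t x, S t x -> S t (star x)).
Hypothesis freeUV : free_pair phi (S true) (S false).

Definition isM (z : B) := exists x, z = iM x.
Definition cenA (t : bool) (z : B) := exists a, [/\ S t a, phi a = 0 & z = iA a].
Definition cent (o : option B) : bool := if o is Some m then psi m == 0 else false.
Definition Rel : rel (bool * B * option B) := fun e e' => (e.1.1 == e'.1.1) ==> cent e.2.
Definition val_w (m0 : option B) (l : seq (bool * B * option B)) :=
  odflt 1 m0 * \prod_(e <- l) (e.1.2 * odflt 1 e.2).
Definition okM (o : option B) := forall m, o = Some m -> isM m.
Definition okw m0 l := [/\ okM m0, (forall e, e \in l -> cenA e.1.1 e.1.2 /\ okM e.2),
  sorted Rel l & l != [::]].
Definition ncO (o : option B) : nat := if o is Some m then (psi m != 0) else 0%N.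
Definition meas m0 (l : seq (bool * B * option B)) := (ncO m0 + \sum_(e <- l) ncO e.2)%N.

Lemma psiB x y : psi (x - y) = psi x - psi y.
Proof. by rewrite -scaleN1r psiD psiZ mulN1r. Qed.
Lemma phiB x y : phi (x - y) = phi x - phi y.
Proof. by rewrite -scaleN1r phiD phiZ mulN1r. Qed.

Lemma isM1 : isM 1. Proof. by exists 1. Qed.
Lemma isMM x y : isM x -> isM y -> isM (x * y).
Proof. by move=> [a ->] [b ->]; exists (a * b). Qed.
Lemma isMB x y : isM x -> isM y -> isM (x - y).
Proof. by move=> [a ->] [b ->]; exists (a + (-1) *: b); rewrite iMD iMZ scaleN1r. Qed.
Lemma isMZ (c : C) x : isM x -> isM (c *: x).
Proof. by move=> [a ->]; exists (c *: a). Qed.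

Lemma cenM_split m : isM m -> isM (m - psi m *: 1) /\ psi (m - psi m *: 1) = 0.
Proof.
move=> hm; split; first by apply: isMB => //; apply: isMZ; apply: isM1.
by rewrite psiB psiZ psi1 mulr1 subrr.
Qed.

Lemma cenA_split t a : S t a -> cenA t (iA (a - phi a *: 1)) /\ iA a = iA (a - phi a *: 1) + phi a *: 1.
Proof.
move=> ha; split.
  exists (a - phi a *: 1); split => //.
    by apply: SD => //; rewrite -scaleN1r scalerA; apply: SZ; apply: S1.
  by rewrite phiB phiZ phi1 mulr1 subrr.
by rewrite -scaleN1r iAD iAZ iAZ iA1 scaleN1r -addrA addNr addr0.
Qed.

Fixpoint G (l : seq (bool * B * option B)) : seq (bool * B) :=
  if l is e :: l' then
    if e.2 is Some m then (true, e.1.2) :: (false, m) :: G l'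
    else match G l' with
         | (true, y) :: r => (true, e.1.2 * y) :: r
         | r => (true, e.1.2) :: r end
  else [::].

Lemma G_prod l : \prod_(q <- G l) q.2 = \prod_(e <- l) (e.1.2 * odflt 1 e.2).
Proof.
elim: l => [|[[t x] o] l IH] /=; first by rewrite !big_nil.
rewrite big_cons /=; case: o => [m|] /=.
  by rewrite !big_cons /= IH; apply: mulrA.
move: IH; case: (G l) => [|[[] y] r] IH /=; rewrite !big_cons /= -IH ?big_nil ?mulr1 //.
  by rewrite big_cons mulrA.
  by rewrite big_cons.
Qed.

Definition Irun (y : B) (t : bool) := exists r : seq (bool * A),
  [/\ (head (t, 0) r).1 = t, r != [::], sorted (@Ralt A) r,
      (forall q, q \in r -> S q.1 q.2 /\ phi q.2 = 0) &
      y = iA (\prod_(q <- r) q.2)].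

Lemma Irun_good y t : Irun y t -> (exists a, y = iA a) /\ psi y = 0.
Proof.
move=> [r [_ rn sr rS ->]]; split; first by eexists.
rewrite psiA; apply: freeUV.
- by case: (r) rn.
- by move=> k hk; apply: (sorted_nth _ sr).
- move=> k hk /=; have [h1 h2] := rS _ (mem_nth (true, 0) hk).
  by split => //; case: (nth _ _ _).1 h1.
Qed.

Definition goodq (q : bool * B) : Prop :=
  (if q.1 then range iA q.2 else range iM q.2) /\ psi q.2 = 0.

Definition base_ok (l : seq (bool * B * option B)) :=
  (forall e, e \in l -> cenA e.1.1 e.1.2 /\
     (forall m, e.2 = Some m -> isM m /\ psi m = 0)) /\ sorted Rel l.

Lemma G_ok l : base_ok l ->
  [/\ sorted (@Ralt B) (G l), (forall q, q \in G l -> goodq q) &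
      (l = [::] \/ exists y r, G l = (true, y) :: r /\ Irun y (head (true, 0, None) l).1.1)].
Proof.
elim: l => [|[[t x] o] l IH]; first by split => //; left.
move=> [hmem hs].
have hl : base_ok l.
  split; last by apply: (path_sorted hs).
  by move=> e he; apply: hmem; rewrite inE he orbT.
have [sG gG hG] := IH hl.
move: (hmem _ (mem_head _ _)) => /= [[a [Sa pa xa]] ho]; subst x.
have Ia : Irun (iA a) t.
  exists [:: (t, a)]; split => //=; last by rewrite big_seq1.
  by move=> q; rewrite inE => /eqP -> /=.
case: o hmem hs ho => [m|] hmem hs ho /=.
  have [mM mc] := ho m erefl.
  split.
  - move: sG; rewrite /= /Ralt /=; case: hG => [->|[y [r [-> _]]]] //=.
  - move=> q; rewrite !inE => /orP [/eqP -> | /orP [/eqP -> | /gG //]].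
      by have [[a' ->] h] := Irun_good Ia; split => //; exists a'.
    by case: mM mc => M0 -> mc; split => //=; exists M0.
  - by right; exists (iA a), ((false, m) :: G l).
case: hG => [El | [y [r [Gl Iy]]]].
  subst l; split => //.
  - move=> q; rewrite inE => /eqP -> /=.
    by have [[a' ->] h] := Irun_good Ia; split => //; exists a'.
  - by right; exists (iA a), [::].
case: l hmem hl hs Gl Iy IH sG gG => [|[[t' x'] o'] l] hmem hl hs Gl Iy IH sG gG; first by [].
rewrite Gl /=.
have tt' : t != t'.
  by move: hs => /= /andP []; rewrite /Rel /= implybF.
have Iay : Irun (iA a * y) t.
  move: Iy => [ry [hry ryn sry rS ->]] /=.
  exists ((t, a) :: ry); split => //.
  - case: ry hry ryn sry {rS} => [|q ry] //= hq _ ->; rewrite andbT /Ralt /= hq; exact: tt'.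
  - by move=> q; rewrite inE => /orP [/eqP -> // | /rS].
  - by rewrite big_cons iAM.
move: sG; rewrite Gl /= => sG.
split.
- by case: r {Gl gG} sG.
- move=> q; rewrite inE => /orP [/eqP -> | hq].
    by have [[a' ->] h] := Irun_good Iay; split => //; exists a'.
  by apply: gG; rewrite Gl inE hq orbT.
- by right; exists (iA a * y), r.
Qed.


Lemma base_psi m0 l : okw m0 l -> meas m0 l = 0%N -> psi (val_w m0 l) = 0.
Proof.
move=> [om0 ol sl ln] /eqP; rewrite /meas addn_eq0 sum_nat_seq_eq0 => /andP [h0 /allP hl].
have bl : base_ok l.
  split => // e he; have [c1 c2] := ol e he; split => // m em.
  split; first exact: c2.
  by have := hl e he; rewrite em /= eqb0 negbK => /eqP.
have [sG gG [El|[y [r [Gl Iy]]]]] := G_ok bl; first by rewrite El in ln.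
set s := if m0 is Some m then (false, m) :: G l else G l.
have -> : val_w m0 l = \prod_(q <- s) q.2.
  rewrite /val_w -G_prod /s; case: (m0) => [m|] /=; by rewrite ?big_cons ?mul1r.
have ss : sorted (@Ralt B) s.
  rewrite /s; case: (m0) => // m; move: sG; rewrite Gl /= => ->. by [].
have gs : forall q, q \in s -> goodq q.
  rewrite /s; case: (m0) om0 h0 => [m1|] om0 h0 // q; rewrite inE => /orP [/eqP -> | /gG //].
  have [M0 eM] := om0 m1 erefl; split; first by exists M0.
  by move: h0; rewrite /= eqb0 negbK => /eqP.
apply: freeAM.
- by rewrite /s Gl; case: (m0).
- by move=> k hk; apply: (sorted_nth _ ss).
- move=> k hk /=; have [h1 h2] := gs _ (mem_nth (true, 0) hk).
  by split => //; case: (nth _ _ _).1 h1.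
Qed.

Lemma split_id (a b x m' d : B) (c : C) :
  a * (b * (x * (m' + c *: 1) * d)) = a * (b * (x * m' * d)) + c *: (a * (b * (x * 1 * d))).
Proof. by rewrite mulrDr mulrDl !mulrDr -scalerAr -scalerAl -!scalerAr. Qed.

Lemma T_struct k m0 l : (meas m0 l <= k)%N -> okw m0 l -> psi (val_w m0 l) = 0.
Proof.
elim: k m0 l => [|k IH] m0 l hk ok.
  by apply: base_psi => //; apply/eqP; rewrite -leqn0.
case: ok => [om0 ol sl ln].
case: (posnP (ncO m0)) => h0.
  case: (posnP (meas m0 l)) => hm; first by apply: base_psi.
  move: hm; rewrite /meas h0 add0n lt0n sum_nat_seq_neq0 => /hasP [e he].
  rewrite andTb; case: e he => [[t x] [m|]] he //= nm0.
  have nm : psi m != 0 by case: (psi m != 0) nm0.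
  move: ol sl ln hk; case/splitPr: he => l1 l2 ol sl ln hk.
  have mM : isM m by apply: (proj2 (ol (t, x, Some m) _)) => //; rewrite mem_cat inE eqxx orbT.
  have [mM' mc'] := cenM_split mM.
  set m' := m - (psi m)%:A.
  have mc2 : psi m' = 0 by [].
  have mM2 : isM m' by [].
  have -> : val_w m0 (l1 ++ (t, x, Some m) :: l2) =
     val_w m0 (l1 ++ (t, x, Some m') :: l2) + psi m *: val_w m0 (l1 ++ (t, x, None) :: l2).
    by rewrite /val_w !big_cat !big_cons /= -split_id subrK.
  rewrite (psiD (val_w _ _)) psiZ (IH m0 (l1 ++ (t, x, Some m') :: l2)) ?(IH m0 (l1 ++ (t, x, None) :: l2)) ?mulr0 ?addr0 //.
  + move: hk; rewrite /meas !big_cat !big_cons /= nm.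
    by rewrite add0n add1n !addnS ltnS.
  + split => //.
    * move=> e; rewrite !mem_cat !inE => /or3P [h|/eqP ->|h].
      - by apply: ol; rewrite mem_cat h.
      - split => //; apply: (proj1 (ol (t, x, Some m) _)); by rewrite mem_cat inE eqxx orbT.
      - by apply: ol; rewrite mem_cat inE h !orbT.
    * apply: sorted_replace sl _ _ => // y; rewrite /Rel /=.
      by rewrite (negbTE nm).
    * by case: (l1).
  + move: hk; rewrite /meas !big_cat !big_cons /= nm mc2 eqxx.
    by rewrite add0n add1n !addnS ltnS.
  + split => //.
    * move=> e; rewrite !mem_cat !inE => /or3P [h|/eqP ->|h].
      - by apply: ol; rewrite mem_cat h.
      - split; last by move=> m1 [<-].
        apply: (proj1 (ol (t, x, Some m) _)); by rewrite mem_cat inE eqxx orbT.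
      - by apply: ol; rewrite mem_cat inE h !orbT.
    * apply: sorted_replace sl _ _ => // y; rewrite /Rel /= mc2 eqxx.
      by rewrite implybT.
    * by case: (l1).
case: m0 om0 hk h0 => [m|] //= om0 hk; rewrite lt0b => nm.
have mM := om0 m erefl.
have [mM' mc'] := cenM_split mM.
have -> : val_w (Some m) l = val_w (Some (m - psi m *: 1)) l + psi m *: val_w None l.
  by rewrite /val_w /= scalerAl -mulrDl subrK.
rewrite (psiD (val_w _ _)) psiZ (IH (Some (m - (psi m)%:A)) l) ?(IH None l) ?mulr0 ?addr0 //.
+ by move: hk; rewrite /meas /= nm add1n add0n ltnS.
+ by move: hk; rewrite /meas /= mc' eqxx nm add1n add0n ltnS.
+ by split => // m1 [<-].
Qed.


Inductive span (P : B -> Prop) : B -> Prop :=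
  | sp0 : span P 0
  | spP x : P x -> span P x
  | spD x y : span P x -> span P y -> span P (x + y)
  | spZ (c : C) x : span P x -> span P (c *: x).

Definition lin (f : B -> C) :=
  (forall x y, f (x + y) = f x + f y) /\ (forall (c : C) x, f (c *: x) = c * f x).

Lemma lin0 f : lin f -> f 0 = 0.
Proof. by move=> [fD _]; apply: idem0; rewrite -fD addr0. Qed.

Lemma span_lin (P : B -> Prop) f y : lin f -> (forall w, P w -> f w = 0) -> span P y -> f y = 0.
Proof.
move=> hf hP; elim => [|x|x z _ hx _ hz|c x _ hx].
- exact: lin0.
- exact: hP.
- by rewrite hf.1 hx hz addr0.
- by rewrite hf.2 hx mulr0.
Qed.

Lemma span_span (P Q : B -> Prop) y : (forall w, P w -> span Q w) -> span P y -> span Q y.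
Proof.
move=> h; elim => [|x|x z _ hx _ hz|c x _ hx]; by [apply: sp0 | apply: h | apply: spD | apply: spZ].
Qed.

Lemma span_mul_l (P Q : B -> Prop) z y : (forall w, P w -> span Q (z * w)) -> span P y -> span Q (z * y).
Proof.
move=> h; elim => [|x|x w _ hx _ hw|c x _ hx].
- by rewrite mulr0; apply: sp0.
- exact: h.
- by rewrite mulrDr; apply: spD.
- by rewrite -scalerAr; apply: spZ.
Qed.

Lemma span_mul_r (P Q : B -> Prop) z y : (forall w, P w -> span Q (w * z)) -> span P y -> span Q (y * z).
Proof.
move=> h; elim => [|x|x w _ hx _ hw|c x _ hx].
- by rewrite mul0r; apply: sp0.
- exact: h.
- by rewrite mulrDl; apply: spD.
- by rewrite -scalerAl; apply: spZ.
Qed.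

Lemma span_mul (P : B -> Prop) x y : (forall a b, P a -> P b -> P (a * b)) ->
  span P x -> span P y -> span P (x * y).
Proof.
move=> h sx sy; apply: (span_mul_r (P := P)) sx => w Pw.
by apply: (span_mul_l (P := P)) sy => w' Pw'; apply: spP; apply: h.
Qed.

Lemma span_star (P : B -> Prop) x : (forall a, P a -> P (star a)) -> span P x -> span P (star x).
Proof.
move=> h; elim => [|y|y w _ hy _ hw|c y _ hy].
- by rewrite star0; apply: sp0.
- by move=> /h; apply: spP.
- by rewrite sa_starD; apply: spD.
- by rewrite sa_starZ; apply: spZ.
Qed.

Definition Wd (t : bool) (w : B) := exists m0 l,
  [/\ w = val_w m0 l, okw m0 l & all (fun e => e.1.1 == t) l].

Lemma Wd_psi t w : Wd t w -> psi w = 0.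
Proof. by move=> [m0 [l [-> ok _]]]; apply: (@T_struct (meas m0 l)). Qed.

Lemma psi_lin : lin psi. Proof. by split. Qed.

Lemma ML (s : seq (bool * B)) :
  (forall q, q \in s -> span (Wd q.1) q.2) ->
  forall f, lin f ->
  (forall s', map fst s' = map fst s -> (forall q, q \in s' -> Wd q.1 q.2) ->
     f (\prod_(q <- s') q.2) = 0) ->
  f (\prod_(q <- s) q.2) = 0.
Proof.
elim: s => [|[t y] s IH] hs f hf H; first by apply: (H [::]).
rewrite big_cons /=.
have sy : span (Wd t) y by apply: (hs (t, y)); rewrite mem_head.
apply: (span_lin (P := Wd t) (f := fun z => f (z * \prod_(q <- s) q.2))) sy.
  by split => [a b|c a]; rewrite ?mulrDl ?hf.1 // -scalerAl hf.2.
move=> w Ww; apply: (IH _ (fun x => f (w * x))).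
- by move=> q hq; apply: hs; rewrite inE hq orbT.
- by split => [a b|c a]; rewrite ?mulrDr ?hf.1 // -scalerAr hf.2.
- move=> s' es' hs'; have := H ((t, w) :: s'); rewrite big_cons /=; apply; first by rewrite es'.
  by move=> q; rewrite inE => /orP [/eqP -> //|/hs'].
Qed.

Lemma isM_odflt o : okM o -> isM (odflt 1 o).
Proof. by case: o => [m|] h /=; [apply: h | apply: isM1]. Qed.

Lemma sorted_replace_last (T : Type) (R : rel T) l1 (e e' : T) :
  sorted R (rcons l1 e) -> (forall x, R x e -> R x e') -> sorted R (rcons l1 e').
Proof.
case: l1 => [|a l1] //=; rewrite !rcons_path => /andP [-> H] H1 /=; exact: H1.
Qed.

Lemma Wd_head t w : Wd t w -> exists m0 l1 x o,
  [/\ w = val_w m0 (rcons l1 (t, x, o)), okw m0 (rcons l1 (t, x, o))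
    & all (fun e => e.1.1 == t) (rcons l1 (t, x, o))].
Proof.
move=> [m0 [l [-> ok al]]]; case: ok => om ol sl ln.
case/lastP: l ol sl ln al => [|l1 [[t' x] o]] ol sl ln al //.
have tt : t' = t by move: al; rewrite all_rcons /= => /andP [/eqP].
subst t'; exists m0, l1, x, o; split => //.
Qed.

Lemma combine s' : s' != [::] -> sorted (@Ralt B) s' -> (forall q, q \in s' -> Wd q.1 q.2) ->
  exists m0 l, [/\ \prod_(q <- s') q.2 = val_w m0 l, okw m0 l &
                   (head (true, 0, None) l).1.1 = (head (true, 0) s').1].
Proof.
elim: s' => [|[t w] s IH] // _ ss hs.
have [m0 [l1 [x [o [ew okl al]]]]] := Wd_head (hs (t, w) (mem_head _ _)).
have hd : (head (true, 0, None) (rcons l1 (t, x, o))).1.1 = t.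
  by case: (l1) al => [|e l1'] //= /andP [/eqP].
case: s IH ss hs => [|[t' w'] s] IH ss hs.
  by exists m0, (rcons l1 (t, x, o)); rewrite big_cons big_nil mulr1 ew.
have [m0' [l' [ew' okl' hd']]] : exists m0 l, [/\ \prod_(q <- (t', w') :: s) q.2 = val_w m0 l, okw m0 l &
                   (head (true, 0, None) l).1.1 = t'].
  apply: IH => //; first by apply: (path_sorted ss).
  by move=> q hq; apply: hs; rewrite inE hq orbT.
have tt' : t != t' by move: ss => /= /andP [].
case: okl => om ol sl ln; case: okl' => om' ol' sl' ln'.
set e' := (t, x, Some (odflt 1 o * odflt 1 m0')).
exists m0, (l1 ++ e' :: l'); split.
- rewrite big_cons ew' ew /val_w -cats1 !big_cat !big_cons !big_nil /=.
  by rewrite !mulr1 !mulrA.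
- split => //.
  + move=> e; rewrite mem_cat inE => /orP [h|/orP [/eqP ->|h]].
    * by apply: ol; rewrite mem_rcons inE h orbT.
    * split => /=; last by move=> m [<-]; apply: isMM; apply: isM_odflt => //; apply: (proj2 (ol (t, x, o) _)); rewrite mem_rcons mem_head.
      by apply: (proj1 (ol (t, x, o) _)); rewrite mem_rcons mem_head.
    * exact: ol'.
  + rewrite sorted_cat_cons; apply/andP; split.
      by apply: sorted_replace_last sl _.
    case: l' ln' sl' hd' {ol' ew'} => [|e2 l2] //= _ -> he2; rewrite andbT /Rel /= he2.
    by rewrite (negbTE tt').
  + by case: (l1).
- by case: (l1) al => [|e l1'] //= /andP [/eqP].
Qed.

Lemma words_psi s' : s' != [::] -> sorted (@Ralt B) s' -> (forall q, q \in s' -> Wd q.1 q.2) ->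
  psi (\prod_(q <- s') q.2) = 0.
Proof.
move=> sn ss hs; have [m0 [l [-> ok _]]] := combine sn ss hs.
exact: (@T_struct (meas m0 l)).
Qed.


Definition NFp t w := isM w \/ Wd t w.
Definition LWl t z := isM z \/ exists a, S t a /\ z = iA a.

Lemma mulA0 t a w : S t a -> phi a = 0 -> NFp t w -> span (NFp t) (iA a * w).
Proof.
move=> Sa pa [wM|[m0 [l [-> [om ol sl ln] al]]]].
  apply: spP; right; exists None, [:: (t, iA a, Some w)]; split.
  - by rewrite /val_w big_seq1 mul1r.
  - split => //.
    by move=> e; rewrite inE => /eqP -> /=; split; [exists a | move=> m [<-]].
  - by rewrite /= eqxx.
case: l om ol sl ln al => [|[[t1 x1] o1] l'] // om ol sl _ al.
have t1t : t1 = t by move: al => /= /andP [/eqP].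
subst t1.
have mM := isM_odflt om.
set m := odflt 1 m0 in mM *.
have [mM' mc'] := cenM_split mM.
set m' := m - psi m *: 1 in mM' mc' *.
have [[a1 [Sa1 pa1 ex1]] ho1] := ol _ (mem_head _ _).
rewrite /= in Sa1 ex1; subst x1.
have Sb : S t (a * a1) by apply: SM.
have [cb eb] := cenA_split Sb.
set b' := iA (a * a1 - phi (a * a1) *: 1) in cb eb *.
set d := phi (a * a1) in eb *.
set P' := \prod_(e <- l') (e.1.2 * odflt 1 e.2).
set o' := odflt 1 o1.
have -> : iA a * val_w m0 ((t, iA a1, o1) :: l') =
   val_w None ((t, iA a, Some m') :: (t, iA a1, o1) :: l') +
   psi m *: (val_w None ((t, b', o1) :: l') + d *: (o' * P')).
  rewrite /val_w !big_cons /= -/m -/P' -/o' !mul1r.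
  have em : m = m' + psi m *: 1 by rewrite /m' subrK.
  rewrite {1}em mulrDl mulrDr mulrA.
  congr (_ + _).
  rewrite -scalerAl mul1r -scalerAr; congr (_ *: _).
  by rewrite !mulrA -iAM eb !mulrDl -scalerAl mul1r -scalerAl.
apply: spD; last (apply: spZ; apply: spD; last apply: spZ).
- apply: spP; right; exists None, ((t, iA a, Some m') :: (t, iA a1, o1) :: l'); split => //.
  + split => //.
    * move=> e; rewrite inE => /orP [/eqP -> /=|/ol //]; split; first by exists a.
      by move=> m1 [<-].
    * by move: sl; rewrite /= => ->; rewrite andbT /Rel /= mc' !eqxx.
  + by move: al; rewrite /= !eqxx.
- apply: spP; right; exists None, ((t, b', o1) :: l'); split => //.
  + split => //.
    * move=> e; rewrite inE => /orP [/eqP -> /=|he]; first by split.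
      by apply: ol; rewrite inE he orbT.
    * by apply: (@sorted_replace _ _ [::] l' (t, iA a1, o1)).
- rewrite /P'; clear P'; case: l' ol sl al => [|e2 l2] ol sl al.
    by rewrite big_nil mulr1; apply: spP; left; apply: isM_odflt.
  apply: spP; right; exists (Some o'), (e2 :: l2); split => //.
  + split => //.
    * by move=> m1 [<-]; apply: isM_odflt.
    * by move=> e he; apply: ol; rewrite inE he orbT.
    * exact: (path_sorted sl).
  + by move: al => /= /andP [].
Qed.

Lemma mulNF t z w : LWl t z -> NFp t w -> span (NFp t) (z * w).
Proof.
move=> [zM|[a [Sa ->]]] hw.
  case: hw => [wM|[m0 [l [-> [om ol sl ln] al]]]].
    by apply: spP; left; apply: isMM.
  apply: spP; right; exists (Some (z * odflt 1 m0)), l; split => //.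
  - by rewrite /val_w /= mulrA.
  - split => // m1 [<-]; apply: isMM => //; exact: isM_odflt.
have [[a' [Sa' pa' ea']] ea] := cenA_split Sa.
rewrite ea mulrDl -scalerAl mul1r; apply: spD; last by apply: spZ; apply: spP.
rewrite ea'; exact: mulA0.
Qed.

Lemma LW_NF t (ls : seq B) : (forall z, z \in ls -> LWl t z) ->
  span (NFp t) (\prod_(z <- ls) z).
Proof.
elim: ls => [|z ls IH] hz; first by rewrite big_nil; apply: spP; left; apply: isM1.
rewrite big_cons; apply: (span_mul_l (P := NFp t)).
  by move=> w hw; apply: mulNF => //; apply: hz; rewrite mem_head.
by apply: IH => y hy; apply: hz; rewrite inE hy orbT.
Qed.

Definition pE := iM (Eu C ord0 ord0).

Lemma cmpr t y : span (NFp t) y -> exists c z, pE * y * pE = c *: pE + z /\ span (Wd t) z.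
Proof.
elim => [|w hw|x y' _ [c1 [z1 [e1 s1]]] _ [c2 [z2 [e2 s2]]]|c x _ [c1 [z1 [e1 s1]]]].
- by exists 0, 0; rewrite mulr0 mul0r scale0r addr0; split => //; apply: sp0.
- case: hw => [[X ->]|hw].
    exists (X ord0 ord0), 0; rewrite /pE -!iMM cmp_mx iMZ addr0; split => //; apply: sp0.
  have [m0 [l1 [x [o [ew [om ol sl ln] al]]]]] := Wd_head hw.
  exists 0, (pE * w * pE); rewrite scale0r add0r; split => //.
  apply: spP; exists (Some (pE * odflt 1 m0)), (rcons l1 (t, x, Some (odflt 1 o * pE))); split.
  + rewrite ew /val_w -!cats1 !big_cat !big_cons !big_nil /=.
    by rewrite !mulr1 !mulrA.
  + split.
    * by move=> m1 [<-]; apply: isMM; [exists (Eu C ord0 ord0) | apply: isM_odflt].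
    * move=> e; rewrite mem_rcons inE => /orP [/eqP -> /=|h].
        split; last by move=> m1 [<-]; apply: isMM; [apply: isM_odflt; apply: (proj2 (ol (t, x, o) _)); rewrite mem_rcons mem_head | exists (Eu C ord0 ord0)].
        by apply: (proj1 (ol (t, x, o) _)); rewrite mem_rcons mem_head.
      by apply: ol; rewrite mem_rcons inE h orbT.
    * by apply: sorted_replace_last sl _.
    * by case: (l1).
  + by move: al; rewrite !all_rcons.
- exists (c1 + c2), (z1 + z2); split; last by apply: spD.
  by rewrite mulrDr mulrDl e1 e2 scalerDl addrACA.
- exists (c * c1), (c *: z1); split; last by apply: spZ.
  by rewrite -scalerAr -scalerAl e1 scalerDr scalerA.
Qed.

Lemma range_span t y : pE * y * pE = y -> span (NFp t) y -> psi y = 0 -> span (Wd t) y.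
Proof.
move=> hy sy py; have [c [z [e sz]]] := cmpr sy.
have pz : psi z = 0 by apply: (span_lin psi_lin (@Wd_psi t)).
have c0 : c = 0.
  move: py; rewrite -hy e psiD psiZ pz addr0 /pE psiM tr_E00.
  by move/eqP; rewrite mulf_eq0 invr_eq0 pnatr_eq0 orbF => /eqP.
by rewrite -hy e c0 scale0r add0r.
Qed.

Definition LWP t (z : B) := exists ls : seq B,
  z = \prod_(y <- ls) y /\ (forall y, y \in ls -> LWl t y).

Lemma star_prod (ls : seq B) : star (\prod_(y <- ls) y) = \prod_(y <- rev (map (sa_star B) ls)) y.
Proof.
elim: ls => [|z ls IH]; first by rewrite big_nil star1.
by rewrite big_cons sa_starM IH /= rev_cons -cats1 big_cat big_seq1.
Qed.

Lemma part2 (Un : starAlg C) (u : 'I_n.+1 -> 'I_n.+1 -> Un) (j : bool -> Un -> B) (X : bool -> A) :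
  (forall x, iM (star x) = star (iM x)) -> (forall x, iA (star x) = star (iA x)) -> is_Unc u ->
  (forall t, corner_star_hom pE (j t)) ->
  (forall t i k, j t (u i k) = iM (Eu C ord0 i) * iA (X t) * iM (Eu C k ord0)) ->
  (forall t, S t (X t)) ->
  free_pair (fun x => (n.+1)%:R * psi x) (range (j true)) (range (j false)).
Proof.
move=> iMS iAS hU cj ju SX.
have LWstar t a : LWP t a -> LWP t (star a).
  move=> [ls [-> hls]]; exists (rev (map (sa_star B) ls)); split; first exact: star_prod.
  move=> y; rewrite mem_rev => /mapP [z hz ->]; case: (hls z hz) => [[Z ->]|[a' [Sa' ->]]].
    by left; exists (star Z).
  by right; exists (star a'); split; [apply: SS | rewrite iAS].
have LWmul t a b : LWP t a -> LWP t b -> LWP t (a * b).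
  move=> [la [-> ha]] [lb [-> hb]]; exists (la ++ lb); split; first by rewrite big_cat.
  by move=> y; rewrite mem_cat => /orP [/ha|/hb].
have jLW t w : span (LWP t) (j t w).
  have [jD jZ jM j1 jS] := cj t.
  apply: (gen_ind (P := fun w => span (LWP t) (j t w)) hU).
  - rewrite j1; apply: spP; exists [:: pE]; split; first by rewrite big_seq1.
    by move=> y; rewrite inE => /eqP ->; left; exists (Eu C ord0 ord0).
  - by move=> x y hx hy; rewrite jD; apply: spD.
  - by move=> c x hx; rewrite jZ; apply: spZ.
  - by move=> x y hx hy; rewrite jM; apply: span_mul => //; apply: LWmul.
  - by move=> x hx; rewrite jS; apply: span_star => //; apply: LWstar.
  - move=> i k; rewrite ju; apply: spP.
    exists [:: iM (Eu C ord0 i); iA (X t); iM (Eu C k ord0)]; split.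
      by rewrite !big_cons big_nil mulr1 !mulrA.
    move=> y; rewrite !inE => /or3P [/eqP ->|/eqP ->|/eqP ->].
    + by left; exists (Eu C ord0 i).
    + by right; exists (X t); split.
    + by left; exists (Eu C k ord0).
have rWd t y : range (j t) y -> psi y = 0 -> span (Wd t) y.
  move=> [w ->] py; apply: range_span => //.
    have [_ _ jM j1 _] := cj t.
    by rewrite -j1 -!jM mul1r mulr1.
  apply: (span_span (P := LWP t)) (jLW t w) => z [ls [-> hls]].
  exact: LW_NF.
move=> s sn alt hs.
apply/eqP; rewrite mulf_eq0 pnatr_eq0 /=; apply/eqP.
have ss : sorted (@Ralt B) s.
  by apply: (@nth_sorted _ (@Ralt B) (true, 0) s) => k; apply: alt.
have hs1 : forall q, q \in s -> span (Wd q.1) q.2.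
  move=> q hq; have hi : (index q s < size s)%N by rewrite index_mem.
  have := hs _ hi; rewrite nth_index // => -[h1 h2].
  apply: rWd; last by move/eqP: h2; rewrite mulf_eq0 pnatr_eq0 /= => /eqP.
  by case: (q.1) h1.
apply: (ML hs1 psi_lin) => s' es' hs'; apply: words_psi => //.
- by case: s' es' {hs'} => [|? ?] //; case: (s) sn => //.
- have e1 : forall l : seq (bool * B), sorted (@Ralt B) l = sorted (fun a b : bool => a != b) (map fst l) by move=> l; rewrite sorted_map.
  by rewrite e1 es' -e1.
Qed.

End Free.

Unset Implicit Arguments. Set Strict Implicit.

Theorem mainTheorem4 (C : numClosedFieldType) (n : nat)
  (A : starAlg C) (phi : A -> C) (U V : A)
  (B : starAlg C) (iA : A -> B) (iM : Mstar C n -> B) (psi : B -> C)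
  (Un : starAlg C) (u : 'I_n.+1 -> 'I_n.+1 -> Un)
  (jU jV jUinv jUV : Un -> B) :
  is_state phi -> unitary U -> unitary V ->
  is_free_product iA iM ->
  is_free_product_state iA iM phi (@ntr C n) psi ->
  is_Unc u ->
  let E := fun i j => iM (Eu C i j) in
  let p := E ord0 ord0 in
  corner_star_hom p jU ->
  (forall i j, jU (u i j) = E ord0 i * iA U * E j ord0) ->
  corner_star_hom p jV ->
  (forall i j, jV (u i j) = E ord0 i * iA V * E j ord0) ->
  corner_star_hom p jUinv ->
  (forall i j, jUinv (u i j) = E ord0 i * iA (star U) * E j ord0) ->
  corner_star_hom p jUV ->
  (forall i j, jUV (u i j) = E ord0 i * iA (U * V) * E j ord0) ->
  [/\ (* (1a)  j_{U^{-1}} = j_U o Sigma *)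
      (forall Sigma : Un -> Un,
         unital_star_hom Sigma ->
         (forall i j, Sigma (u i j) = star (u j i)) ->
         forall x, jUinv x = jU (Sigma x)),
      (* (1b)  j_{UV} = j_U * j_V = (j_U |_| j_V) o Delta *)
      (forall (W : starAlg C) (k1 k2 : Un -> W) (Delta : Un -> W) (h : W -> B),
         is_free_product k1 k2 ->
         unital_star_hom Delta ->
         (forall i j, Delta (u i j) = \sum_(k < n.+1) k1 (u i k) * k2 (u k j)) ->
         corner_star_hom p h ->
         (forall x, h (k1 x) = jU x) ->
         (forall x, h (k2 x) = jV x) ->
         forall x, jUV x = h (Delta x)) &
      (* (2)  freeness is transported *)
      (free_pair phi (genStar (fun x => x = U)) (genStar (fun x => x = V)) ->
       free_pair (fun x => (n.+1)%:R * psi x) (range jU) (range jV))].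
Proof.
move=> phiS uU uV fpA fps hUn E p cU jUu cV jVu cUi jUiu cUV jUVu.
have [[iAD iAZ iAM iA1 iAS] [iMD iMZ iMM iM1 iMS] _] := fpA.
split.
- move=> Sigma hS Su; apply: (corner_eq hUn cUi (corner_comp cU hS)) => i j /=.
  rewrite Su; case: cU => _ _ _ _ ->; rewrite jUu jUiu !sa_starM -iAS /E -!iMS !star_Eu.
  by rewrite mulrA.
- move=> W k1 k2 Delta h fpk hD Du ch hk1 hk2.
  apply: (corner_eq hUn cUV (corner_comp ch hD)) => i j /=.
  case: (ch) => chD _ chM _ _.
  rewrite Du hom_sum //.
  under eq_bigr => k _ do rewrite chM hk1 hk2 jUu jVu.
  rewrite jUVu iAM.
  transitivity (E ord0 i * iA U * (\sum_(k < n.+1) E k ord0 * E ord0 k) * iA V * E j ord0).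
    have -> : \sum_(k < n.+1) E k ord0 * E ord0 k = 1.
      rewrite (eq_bigr (fun k => iM (Eu C k k))); last by move=> k _; rewrite /E -iMM mul_Eu.
      by rewrite -hom_sum // sum_Eu iM1.
    by rewrite mulr1 mulrA.
  by rewrite mulr_sumr !mulr_suml; apply: eq_bigr => k _; rewrite !mulrA.
- move=> fUV.
  have [[phiD phiZ] phi1 _] := phiS.
  have [[psiD psiZ] psi1 psiA psiM freeAM] := fps.
  pose S t := if t then genStar (fun x => x = U) else genStar (fun x => x = V).
  have S1 t : S t 1 by case: t; apply: genStar_1.
  have SD t x y : S t x -> S t y -> S t (x + y) by case: t; apply: genStar_add.
  have SZ t (c : C) x : S t x -> S t (c *: x) by case: t; apply: genStar_scale.
  have SM t x y : S t x -> S t y -> S t (x * y) by case: t; apply: genStar_mul.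
  have SS t x : S t x -> S t (star x) by case: t; apply: genStar_star.
  have SX t : S t (if t then U else V) by case: t; apply: genStar_in.
  have cj t : corner_star_hom p ((fun t => if t then jU else jV) t) by case: t.
  have ju t i k : (fun t => if t then jU else jV) t (u i k) =
      iM (Eu C ord0 i) * iA (if t then U else V) * iM (Eu C k ord0).
    by case: t; [apply: jUu | apply: jVu].
  exact: (@part2 C n A B phi iA iM psi S iAD iAZ iAM iA1 iMD iMZ iMM iM1 psiD psiZ psi1
    psiA psiM freeAM phiD phiZ phi1 S1 SD SZ SM SS fUV Un u
    (fun t => if t then jU else jV) (fun t => if t then U else V) iMS iAS hUn cj ju SX).
Qed.
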